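(* Let $G=(V,E)$ be a graph on $n$ vertices and define $f:\mathbb{C}^{2n}\to\mathbb{C}^E$ by $$\left(p^{(1)}_v,p^{(2)}_v\right)_{v\in V}\longmapsto\left((p^{(1)}_v-p^{(1)}_u)(p^{(2)}_v-p^{(2)}_u)\right)_{uv\in E}.$$ Then the Zariski closure $\overline{f(\mathbb{C}^{2n})}$ (and consequently $f(\mathbb{C}^{2n})$) is not contained in any linear hyperplane of $\mathbb{C}^E$. *)

(* Defs.v *)
From mathcomp Require Import all_boot all_order all_algebra complex.
From mathcomp Require Import reals.
Set Implicit Arguments. Unset Strict Implicit. Unset Printing Implicit Defensive.
Import GRing.Theory Num.Theory.
Local Open Scope ring_scope.

(* A simple graph on the vertex set 'I_n is a symmetric irreflexive relation adj.
   Its edge set E: each edge uv is represented once, as the pair (u,v) with u < v. *)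
Definition edges (n : nat) (adj : rel 'I_n) : {set 'I_n * 'I_n} :=
  [set uv : 'I_n * 'I_n | ((uv.1 < uv.2)%N && adj uv.1 uv.2)].

(* The map f : C^{2n} -> C^E, p = (p1_v, p2_v)_v  |->  ((p1_v - p1_u)(p2_v - p2_u))_{uv in E}.
   A point of C^E is a function on pairs, only read on E. *)
Definition fmap (R : realType) (n : nat) (p1 p2 : 'I_n -> R[i]) (uv : 'I_n * 'I_n) : R[i] :=
  (p1 uv.2 - p1 uv.1) * (p2 uv.2 - p2 uv.1).

Definition in_hyperplane (R : realType) (n : nat) (E : {set 'I_n * 'I_n})
  (c : 'I_n * 'I_n -> R[i]) (x : 'I_n * 'I_n -> R[i]) : Prop :=
  \sum_(e in E) c e * x e = 0.

Definition in_some_lin_hyperplane (R : realType) (n : nat) (E : {set 'I_n * 'I_n})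
  (S : ('I_n * 'I_n -> R[i]) -> Prop) : Prop :=
  exists c : 'I_n * 'I_n -> R[i], (exists2 e, e \in E & c e != 0) /\
    forall x, S x -> in_hyperplane E c x.

(* Main.v *)
Require Import Defs.
From mathcomp Require Import all_boot all_order all_algebra complex.
From mathcomp Require Import reals.
Import GRing.Theory Num.Theory.
Local Open Scope ring_scope.

Theorem lemma3p8 (R : realType) (n : nat) (adj : rel 'I_n)
  (adj_sym : symmetric adj) (adj_irr : irreflexive adj) :
  ~ in_some_lin_hyperplane (edges adj)
      (fun x => exists p1 p2 : 'I_n -> R[i], x = fmap p1 p2).
Proof.
case=> c [[e He Hc] H].
have := H (fmap (fun i => (i == e.1)%:R) (fun i => (i == e.2)%:R)).
have Hlt : (e.1 < e.2)%N by move: He; rewrite inE => /andP[].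
move=> /(_ (ex_intro _ _ (ex_intro _ _ erefl))).
rewrite /in_hyperplane (bigD1 e) //= big1 ?addr0.
  have H21 : (e.2 == e.1) = false by apply/negbTE; rewrite -val_eqE /= gtn_eqF.
  have H12 : (e.1 == e.2) = false by apply/negbTE; rewrite -val_eqE /= ltn_eqF.
  rewrite /fmap eqxx H21 H12 eqxx /= => /eqP.
  by rewrite subr0 sub0r ?mulr1n mulr1 mulrN1 oppr_eq0 (negbTE Hc).
case=> u v /andP[]; rewrite inE /= => /andP[Huv _] Hne.
rewrite /fmap /=.
case: e He Hc H Hlt Hne => a b /= _ _ _ Hab Hne.
have [ua|ua] := eqVneq u a; have [va|va] := eqVneq v a;
have [ub|ub] := eqVneq u b; have [vb|vb] := eqVneq v b;
  rewrite /= ?subrr ?mul0r ?mulr0 //; subst;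
  idtac.
- by move: Hab; rewrite ltnn.
- by move: Hne; rewrite eqxx.
- by have := ltn_trans Huv Hab; rewrite ltnn.
- by move: Hab; rewrite ltnn.
Qed.
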